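(* Let $X$ be a $T_1$ space with $|X|<\mathfrak d$. Then $X$ is set strongly star Menger if and only if $e(X)=\omega$.
   Context: For a family $\mathcal U$ of subsets of $X$ and $A\subseteq X$, $st(A,\mathcal U)=\bigcup\{U\in\mathcal U: U\cap A\neq\emptyset\}$. $X$ is set strongly star Menger if for every nonempty $A\subseteq X$ and every sequence $(\mathcal U_n:n\in\omega)$ of families of open sets with $\overline A\subseteq\bigcup\mathcal U_n$ for all $n$, there are finite $F_n\subseteq\overline A$ with $A\subseteq\bigcup_n st(F_n,\mathcal U_n)$. $e(X)$ is the supremum of cardinalities of closed discrete subsets of $X$ ($e(X)=\omega$ means every closed discrete subset is countable). $\mathfrak d$ is the minimal cardinality of a cofinal subset of $(\omega^\omega,\leq^* )$. *)

(* Defs.v *)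
From HB Require Import structures.
From mathcomp Require Import all_boot all_order all_algebra.
From mathcomp Require Import all_classical all_reals topology.
Set Implicit Arguments. Unset Strict Implicit. Unset Printing Implicit Defensive.
Local Open Scope classical_set_scope.

Definition le_star (g f : nat -> nat) : Prop :=
  exists N : nat, forall n : nat, (N <= n)%N -> (g n <= f n)%N.

Definition dominating (D : set (nat -> nat)) : Prop :=
  forall g : nat -> nat, exists2 f, D f & le_star g f.

(* |X| < d : since d is the least cardinality of a dominating family
   (the minimum is attained), |X| < d iff |X| < |D| for every dominating D. *)
Definition card_lt_dominating (X : Type) : Prop :=
  forall D : set (nat -> nat), dominating D ->
    ((([set: X] #<= D)%card : Prop) /\ ~ ((D #<= [set: X])%card : Prop)).

Definition star {X : Type} (A : set X) (U : set (set X)) : set X :=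
  \bigcup_(V in [set V | U V /\ V `&` A !=set0]) V.

Definition set_strongly_star_Menger (X : topologicalType) : Prop :=
  forall A : set X, A !=set0 ->
  forall U : nat -> set (set X),
    (forall n V, U n V -> open V) ->
    (forall n, closure A `<=` \bigcup_(V in U n) V) ->
    exists F : nat -> set X,
      (forall n, finite_set (F n) /\ F n `<=` closure A) /\
      A `<=` \bigcup_n star (F n) (U n).

Definition discrete_subset {X : topologicalType} (A : set X) : Prop :=
  forall x, A x -> exists U : set X, open U /\ U `&` A = [set x].

Definition extent_countable (X : topologicalType) : Prop :=
  forall A : set X, closed A -> discrete_subset A -> countable A.

(* Main.v *)
Require Import Defs.
From HB Require Import structures.
From mathcomp Require Import all_boot all_order all_algebra.
From mathcomp Require Import all_classical all_reals topology.
Set Implicit Arguments. Unset Strict Implicit. Unset Printing Implicit Defensive.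
Local Open Scope classical_set_scope.

Lemma enum_countable T (D : set T) : countable D -> D !=set0 ->
  exists e : nat -> T, (forall k, D (e k)) /\ (forall d, D d -> exists k, e k = d).
Proof.
move=> /countable_injP[f finj] [d0 Dd0].
pose e k := match pselect (exists d, D d /\ f d = k) with
  | left H => projT1 (cid H) | right _ => d0 end.
exists e; split.
  move=> k; rewrite /e; case: pselect => // H.
  by case: (projT2 (cid H)).
move=> d Dd; exists (f d); rewrite /e; case: pselect => [H|]; last first.
  by move=> H; exfalso; apply: H; exists d.
case: (projT2 (cid H)) => D1 E1.
by apply: finj; rewrite ?inE.
Qed.

Lemma dir1 (X : topologicalType) : set_strongly_star_Menger X -> extent_countable X.
Proof.
move=> H A Acl Adisc.
case: (pselect (A !=set0)) => [AN|A0]; last first.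
  have -> : A = set0 by apply/seteqP; split => // x Ax; apply: A0; exists x.
  exact: countable0.
have : forall x, exists O : set X, A x -> open O /\ O `&` A = [set x].
  move=> x; case: (pselect (A x)) => [Ax|nAx]; last by exists set0.
  by have [O HO] := Adisc x Ax; exists O.
move=> /choice[O HO].
have [F [HF1 HF2]] := H A AN (fun _ => O @` A)
   ltac:(by move=> n V [x Ax <-]; case: (HO x Ax))
   ltac:(by move=> n x /Acl Ax; exists (O x) => //; have [_ E] := HO x Ax;
                   have : [set x] x by []; rewrite -E => -[]).
apply: (@sub_countable _ _ _ (\bigcup_n F n)).
  apply: subset_card_le => a Aa.
  have [n _ [V [[x Ax <-] [y [Oy Fy]]] Oa]] := HF2 a Aa.
  have [_ E] := HO x Ax.
  have Ay : A y by apply: Acl; case: (HF1 n) => _; apply.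
  have : (O x `&` A) y by [].
  have : (O x `&` A) a by [].
  rewrite E => -> Ey.
  by exists n => //; rewrite -Ey.
apply: bigcup_countable => // n _.
by apply: finite_set_countable; case: (HF1 n).
Qed.

Lemma key (X : topologicalType) (B : set X) (U : set (set X)) :
  accessible_space X -> closed B -> (forall V, U V -> open V) ->
  B `<=` \bigcup_(V in U) V ->
  exists D, [/\ D `<=` B, closed D, discrete_subset D & B `<=` star D U].
Proof.
move=> T1 Bcl Uop Bcov.
pose P (D : set X) := D `<=` B /\
  (forall V, U V -> forall x y, D x -> D y -> V x -> V y -> x = y).
have [D [[DB Dsep] Dmax]] : exists A, P A /\ forall C, A `<` C -> ~ P C.
  apply: Zorn_bigcup => F FP Ftot; split.
    by move=> x [Y FY Yx]; case: (FP Y FY) => + _; apply.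
  move=> V UV x y [Y FY Yx] [Z FZ Zy] Vx Vy.
  case: (Ftot Y Z FY FZ) => [YZ|ZY].
    by case: (FP Z FZ) => _ /(_ V UV x y (YZ _ Yx) Zy Vx Vy).
  by case: (FP Y FY) => _ /(_ V UV x y Yx (ZY _ Zy) Vx Vy).
have Dstar : B `<=` star D U.
  move=> b Bb; apply: contrapT => nb.
  have nDb : ~ D b.
    move=> Db; apply: nb; have [V UV Vb] := Bcov b Bb.
    by exists V => //; split => //; exists b.
  apply: (Dmax (D `|` [set b])).
    split; first by move=> x Dx; left.
    by move=> /(_ b (or_intror erefl)).
  split.
    by move=> x [/DB|->].
  move=> V UV x y [Dx|->] [Dy|->] Vx Vy.
  - exact: Dsep V UV x y Dx Dy Vx Vy.
  - by exfalso; apply: nb; exists V => //; split => //; exists x.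
  - by exfalso; apply: nb; exists V => //; split => //; exists y.
  - by [].
exists D; split => //.
- move=> p Dp.
  have Bp : B p by apply: Bcl; apply: (closure_subset DB).
  have [V UV Vp] := Bcov p Bp.
  have Vn : nbhs p V by apply: open_nbhs_nbhs; split => //; exact: Uop.
  have [d [Dd Vd]] := Dp V Vn.
  case: (pselect (d = p)) => [<-//|dp].
  have [W [Wop Wp Wd]] := T1 p d (introN eqP (fun e => dp (esym e))).
  have Wn : nbhs p (V `&` W).
    apply: open_nbhs_nbhs; split; first by apply: openI => //; exact: Uop.
    by split => //; move: Wp; rewrite inE.
  have [d' [Dd' [Vd' Wd']]] := Dp _ Wn.
  have := Dsep V UV d' d Dd' Dd Vd' Vd.
  by move=> E; move: Wd; rewrite inE /= -E.
- move=> x Dx; have [V UV Vx] := Bcov x (DB x Dx).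
  exists V; split; first exact: Uop.
  apply/seteqP; split.
    by move=> y [Vy Dy]; apply: (Dsep V UV y x).
  by move=> y ->; split.
Qed.

Lemma star_mono T (A A' : set T) U : A `<=` A' -> star A U `<=` star A' U.
Proof.
move=> AA' x [V [UV [y [Vy Ay]]] Vx]; exists V => //; split => //.
by exists y; split => //; apply: AA'.
Qed.

Lemma dir2 (X : topologicalType) : accessible_space X -> card_lt_dominating X ->
  extent_countable X -> set_strongly_star_Menger X.
Proof.
move=> T1 cX eX A AN U Uop Ucov.
have : forall n, exists e : nat -> X,
    (forall k, closure A (e k)) /\ closure A `<=` star (range e) (U n).
  move=> n.
  have [D [DB Dcl Ddisc Dst]] := key T1 (@closed_closure X A) (Uop n) (Ucov n).
  have [a Aa] := AN.
  have DN : D !=set0.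
    have [V [_ [d [_ Dd]]] _] := Dst a (subset_closure Aa).
    by exists d.
  have [e [eD eS]] := enum_countable (eX D Dcl Ddisc) DN.
  exists e; split; first by move=> k; apply: DB.
  apply: (subset_trans Dst); apply: star_mono => d Dd.
  by have [k <-] := eS d Dd; exists k.
move=> /choice[e He].
have : forall x n, exists k, A x -> star [set e n k] (U n) x.
  move=> x n; case: (pselect (A x)) => [Ax|nAx]; last by exists 0.
  have [V [UV [d [Vd [k _ Ed]]]] Vx] := (He n).2 x (subset_closure Ax); subst d.
  exists k => _; exists V => //; split => //; exists (e n k); split => //.
move=> H1.
have /choice[h Hh] : forall x, exists f : nat -> nat, forall n, A x -> star [set e n (f n)] (U n) x.
  by move=> x; have [f Hf] := choice (H1 x); exists f.
have [g Hg] : exists g, forall f, range h f -> ~ le_star g f.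
  apply: contrapT => nd.
  have dom : dominating (range h).
    move=> g; apply: contrapT => ng; apply: nd; exists g => f Rf lef.
    by apply: ng; exists f.
  have [_] := cX _ dom; apply.
  exact: card_image_le.
exists (fun n => e n @` `I_(g n)); split.
  move=> n; split; first exact: finite_image.
  by move=> _ [k _ <-]; apply: (He n).1.
move=> x Ax.
have : ~ le_star g (h x) by apply: Hg; exists x.
move=> ngx.
have [n ltn] : exists n, (h x n < g n)%N.
  apply: contrapT => nn; apply: ngx; exists 0%N => n _.
  by rewrite leqNgt; apply/negP => lt; apply: nn; exists n.
exists n => //; apply: (star_mono _ (Hh x n Ax)) => _ ->.
by exists (h x n).
Qed.

Theorem corollary2p1 (X : topologicalType) :
  accessible_space X -> card_lt_dominating X ->
  (set_strongly_star_Menger X <-> extent_countable X).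
Proof.
move=> T1 cX; split; first exact: dir1.
exact: dir2.
Qed.
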